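(* Let $p\in[1,\infty]$, let $(U_u)_{u\in[0,T]}$ be concave non-decreasing functions $U_u:\mathbb{R}\to[-\infty,+\infty)$ (not identically $-\infty$), and $(B_{tu})_{0\le t\le u\le T}$ real numbers, and let $(\rho^{U,B}_{tu})_{t,u}$ be the associated fully-dynamic shortfall risk measure. If for all $0\le t\le u\le v\le T$ and all $x\in\mathbb{R}$ one has $U_v(x)-B_{tv}\le U_u(x)-B_{tu}$, then $(\rho^{U,B}_{tu})$ satisfies h-longevity: $\rho^{U,B}_{tv}(X)\ge\rho^{U,B}_{tu}(X)$ for all $t\le u\le v$ and $X\in L^p(\mathcal{F}_u)$. If moreover $U_u$ and $B_{tu}$ do not depend on $u$, then $(\rho^{U,B}_{tu})$ satisfies the restriction property $\rho^{U,B}_{tu}(X)=\rho^{U,B}_{tv}(X)$ for all $t\le u\le v$, $X\in L^p(\mathcal{F}_u)$.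
   Context: $(\mathcal{F}_t)_{t\in[0,T]}$ is a filtration on a probability space $(\Omega,\mathcal{F},P)$. The fully-dynamic shortfall risk measure is $$\rho^{U,B}_{tu}(X)=\operatorname{ess.inf}\{m_t\in L^p(\mathcal{F}_t):E[U_u(X+m_t)\mid\mathcal{F}_t]\ge B_{tu}\},\qquad X\in L^p(\mathcal{F}_u),$$ with $\operatorname{ess.inf}\emptyset=+\infty$; conditional expectations are taken in the extended sense in $[-\infty,\infty)$ (the positive part is integrable since a concave function has an affine majorant). *)

(* Defs.v *)
From HB Require Import structures.
From mathcomp Require Import all_boot all_order all_algebra.
From mathcomp Require Import all_classical all_reals all_analysis measurable_realfun.
Set Implicit Arguments. Unset Strict Implicit. Unset Printing Implicit Defensive.
Import Order.TTheory GRing.Theory Num.Theory.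
Local Open Scope classical_set_scope.
Local Open Scope ring_scope.

Section Shortfall.
Context d (Omega : measurableType d) (R : realType).
Variable P : probability Omega R.

Definition filtration (T : R) (F : R -> set (set Omega)) :=
  (forall t, (0 <= t <= T)%R -> sigma_algebra setT (F t)) /\
  (forall t, (0 <= t <= T)%R -> F t `<=` measurable) /\
  (forall s t, 0 <= s -> s <= t -> t <= T -> F s `<=` F t).

Definition Gmeas_R (G : set (set Omega)) (X : Omega -> R) :=
  forall B : set R, measurable B -> G (X @^-1` B).
Definition Gmeas_eR (G : set (set Omega)) (Y : Omega -> \bar R) :=
  forall B : set (\bar R), measurable B -> G (Y @^-1` B).

Definition Lp (p : \bar R) (G : set (set Omega)) (X : Omega -> R) :=
  Gmeas_R G X /\ ('N[P]_p[EFin \o X] < +oo)%E.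

Definition cond_exp (G : set (set Omega)) (Z Y : Omega -> \bar R) :=
  Gmeas_eR G Y /\
  (\int[P]_x maxe (Y x) 0%E < +oo)%E /\
  (forall A, G A -> (\int[P]_(x in A) Y x = \int[P]_(x in A) Z x)%E).

(** Y is (a version of) the essential infimum of the family S of real
    random variables (ess.inf of the empty family is +oo). *)
Definition is_essinf (S : set (Omega -> R)) (Y : Omega -> \bar R) :=
  measurable_fun setT Y /\
  (forall m, S m -> {ae P, forall w, (Y w <= (m w)%:E)%E}) /\
  (forall Z : Omega -> \bar R, measurable_fun setT Z ->
     (forall m, S m -> {ae P, forall w, (Z w <= (m w)%:E)%E}) ->
     {ae P, forall w, (Z w <= Y w)%E}).

Definition admissible_utility (U : R -> \bar R) :=
  (forall x, U x != +oo%E) /\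
  (exists x, U x != -oo%E) /\
  (forall x y, x <= y -> (U x <= U y)%E) /\
  (forall x y l, (0 <= l <= 1)%R ->
     (l%:E * U x + ((1 - l)%R)%:E * U y <= U (l * x + (1 - l) * y)%R)%E).

Definition shortfall_set (p : \bar R) (F : R -> set (set Omega))
    (U : R -> R -> \bar R) (B : R -> R -> R) (t u : R) (X : Omega -> R) :
    set (Omega -> R) :=
  [set m | Lp p (F t) m /\
     exists C, cond_exp (F t) (fun w => U u (X w + m w)) C /\
       {ae P, forall w, ((B t u)%:E <= C w)%E}].

Definition shortfall_rho (p : \bar R) (F : R -> set (set Omega))
    (U : R -> R -> \bar R) (B : R -> R -> R) (t u : R) (X : Omega -> R)
    (Y : Omega -> \bar R) :=
  is_essinf (shortfall_set p F U B t u X) Y.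

End Shortfall.

(* Main.v *)
Require Import Defs.
From HB Require Import structures.
From mathcomp Require Import all_boot all_order all_algebra.
From mathcomp Require Import all_classical all_reals all_analysis measurable_realfun.
From mathcomp Require Import ring lra.
Set Implicit Arguments. Unset Strict Implicit. Unset Printing Implicit Defensive.
Import Order.TTheory GRing.Theory Num.Theory.
Local Open Scope classical_set_scope.
Local Open Scope ring_scope.

Section GT.
Context d (Omega : measurableType d) (R : realType).

Notation GT G := (g_sigma_algebraType (G `&` (@measurable _ _))).
Definition idG (G : set (set Omega)) : Omega -> GT G := id.

Lemma measGT G (A : set (GT G)) : measurable A -> measurable (A : set Omega).
Proof.
move=> mA; apply: (smallest_sub _ _ mA).
  exact: sigma_algebra_measurable.
by move=> B [].
Qed.

Lemma measurable_idG G : measurable_fun setT (idG G).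
Proof. move=> _ A mA; rewrite setTI; exact: (@measGT G A mA). Qed.

HB.instance Definition _ G := isMeasurableFun.Build _ _ _ _ (idG G) (@measurable_idG G).

Variable P : {measure set Omega -> \bar R}.

Definition cnu G (Z : Omega -> \bar R) (intZ : P.-integrable setT Z) : set (GT G) -> \bar R :=
  fun A => (\int[P]_(x in A) Z x)%E.

Section cnu.
Variables (G : set (set Omega)) (Z : Omega -> \bar R) (intZ : P.-integrable setT Z).
Let nu0 : (@cnu G Z intZ) set0 = 0%E. Proof. by rewrite /cnu integral_set0. Qed.
Let finnu A : measurable A -> (@cnu G Z intZ) A \is a fin_num.
Proof.
move=> mA; apply: integrable_fin_num => //=; first exact: measGT.
apply: integrableS intZ => //; exact: measGT.
Qed.
Let snu : semi_sigma_additive ((@cnu G Z intZ)).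
Proof.
move=> F mF tF mUF.
exact: (@charge_semi_sigma_additive _ _ _ (induced_charge intZ) F (fun n => measGT (mF n)) tF (measGT mUF)).
Qed.
HB.instance Definition _ := isCharge.Build _ _ _ ((@cnu G Z intZ)) nu0 finnu snu.
End cnu.
End GT.
Section CE.
Context d (Omega : measurableType d) (R : realType) (P : probability Omega R).
Local Open Scope ereal_scope.

Lemma cond_exp_ex (G : set (set Omega)) (hG : sigma_algebra setT G)
  (hGm : G `<=` measurable) (Z : Omega -> \bar R) (intZ : P.-integrable setT Z) :
  exists f : Omega -> \bar R, [/\ (forall x, f x \is a fin_num), Gmeas_eR G f,
    P.-integrable setT f &
    forall A, G A -> \int[P]_(x in A) f x = \int[P]_(x in A) Z x].
Proof.
pose mu := distribution P (idG G).
have dom : (@cnu _ _ _ P G Z intZ) `<< mu.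
  apply/null_content_dominatesP => A mA muA0.
  rewrite /cnu; apply: null_set_integral.
  - exact: measGT.
  - apply: measurable_funS (measurable_int _ intZ) => //; exact: measGT.
  - exact: muA0.

pose f := @Radon_Nikodym _ (g_sigma_algebraType (G `&` measurable)) R (@cnu _ _ _ P G Z intZ) mu.
have fint : mu.-integrable setT f by apply: Radon_Nikodym_integrable.
have mfG : measurable_fun setT f by exact: measurable_int fint.
have mfO : measurable_fun [set: Omega] (f : Omega -> \bar R).
  move=> _ B mB; have := mfG measurableT B mB; rewrite !setTI.
  exact: (@measGT _ _ G).
have fintP : P.-integrable setT (f : Omega -> \bar R).
  apply/integrableP; split => //.
  have := (integrableP _ _ _ fint).2.
  rewrite ge0_integral_pushforward.
  - by [].
  - exact: measurable_idG.
  - exact: measurableT.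
  - exact: measurableT_comp.
  - by move=> y _; exact: abse_ge0.
exists f; split.
- by move=> x; apply: Radon_Nikodym_fin_num.
- move=> B mB; have := mfG measurableT B mB; rewrite setTI.
  apply: (smallest_sub hG) => A [] //.
- exact: fintP.
- move=> A GA.
  have mA : measurable (A : set (g_sigma_algebraType (G `&` measurable))) by apply: sub_gen_smallest; split => //; exact: hGm.
  have -> : (\int[P]_(x in A) Z x) = @cnu _ _ _ P G Z intZ A by [].
  rewrite (Radon_Nikodym_integral dom mA).
  rewrite integral_pushforward.
  - by [].
  - exact: measurable_idG.
  - exact: mfG.
  - apply: integrableS fintP => //; exact: hGm.
  - exact: mA.
Qed.
End CE.
Section Util.
Context (R : realType).

Lemma arith_aux (x x0 y l r0 r1 : R) : l * y + (1 - l) * r0 <= r1 ->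
  l * (x - x0) = 1 -> 0 < x - x0 -> r0 <= r1 ->
  y <= `|r0| + `|x0| * (r1 - r0) + `|r1| + (r1 - r0) * `|x|.
Proof.
move=> H hl xx0 r01.
have H2 : y + (x - x0 - 1) * r0 <= (x - x0) * r1.
  have := ler_wpM2l (ltW xx0) H.
  have -> : (x - x0) * (l * y + (1 - l) * r0) = y + (x - x0 - 1) * r0.
    have e : (x - x0) * l = 1 by rewrite mulrC.
    have -> : (x - x0) * (l * y + (1 - l) * r0) =
      ((x - x0) * l) * y + (x - x0) * r0 - ((x - x0) * l) * r0 by ring.
    rewrite e; ring.
  by [].
have H3 : 0 <= (`|x| + `|x0| - (x - x0)) * (r1 - r0).
  apply: mulr_ge0; last by rewrite subr_ge0.
  have := ler_norm x; have := ler_norm (- x0); rewrite normrN; lra.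
have := ler_norm r0; have := normr_ge0 r1; nra.
Qed.
Local Open Scope ereal_scope.

Lemma adm_meas (U : R -> \bar R) : admissible_utility U -> measurable_fun setT U.
Proof.
move=> [_ [_ [Umon _]]].
apply: (measurability (@ErealGenCInfty.G R)) => [|/= _ [_ [r ->] <-]].
  exact: ErealGenCInfty.measurableE.
apply: measurableI => //; apply: is_interval_measurable => s t /=.
rewrite !in_itv/= !andbT => fs ft u /andP[su ut].
by rewrite in_itv/= andbT (le_trans fs)// Umon.
Qed.

Lemma adm_bound (U : R -> \bar R) : admissible_utility U ->
  exists a b : R, (0 <= b)%R /\ forall x, U x <= (a + b * `|x|)%:E.
Proof.
move=> [Unoo [[x0 Ux0] [Umon Ucc]]].
have : U x0 \is a fin_num by rewrite fin_numE Ux0 Unoo.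
move/fineK => e0; set r0 := fine (U x0) in e0.
have h1 : U (x0 + 1)%R \is a fin_num.
  rewrite fin_numE Unoo andbT; apply: contraNneq Ux0 => h.
  by rewrite -leeNy_eq -h Umon// lerDl.
move/fineK : h1 => e1; set r1 := fine (U (x0 + 1)%R) in e1.
have r01 : (r0 <= r1)%R by rewrite -lee_fin e0 e1 Umon// lerDl.
exists (`|r0| + `|x0| * (r1 - r0) + `|r1|)%R, (r1 - r0)%R; split.
  by rewrite subr_ge0.
move=> x; have [xle|xgt] := leP x (x0 + 1)%R.
  apply: (le_trans (Umon _ _ xle)); rewrite -e1 lee_fin.
  have := normr_ge0 x0; have := normr_ge0 x; have := ler_norm r1; have := normr_ge0 r0.
  nra.
pose l := ((x - x0)^-1)%R.
have xx0 : (0 < x - x0)%R by rewrite subr_gt0 (lt_trans _ xgt)// ltrDl.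
have hl : (l * (x - x0) = 1)%R by rewrite /l mulVf// gt_eqF.
have l01 : (0 <= l <= 1)%R.
  apply/andP; split; first by rewrite /l invr_ge0 ltW.
  rewrite /l invf_le1//; lra.
have := Ucc x x0 l l01.
have -> : (l * x + (1 - l) * x0 = x0 + 1)%R.
  by rewrite mulrBl mul1r addrCA -mulrBr hl addrC.
rewrite -e0 -e1.
case Ux: (U x) => [y| |] //.
- rewrite -EFinM -EFinM -EFinD lee_fin => H.
  rewrite lee_fin.
  exact: (arith_aux H hl xx0 r01).
- by move: (Unoo x); rewrite Ux.
- by move=> _; rewrite leNye.
Qed.
End Util.
Section Util2.
Context d (Omega : measurableType d) (R : realType) (P : probability Omega R).
Local Open Scope ereal_scope.

Lemma ae_lb_integral (A : set Omega) (g : Omega -> \bar R) (b : R) :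
  measurable A -> measurable_fun setT g ->
  {ae P, forall w, b%:E <= g w} -> b%:E * P A <= \int[P]_(x in A) g x.
Proof.
move=> mA mg hae.
have mgA : measurable_fun A g by exact: measurable_funTS.
have key c1 c2 : (0 <= c1)%R -> (0 <= c2)%R -> (c1 - c2 = b)%R ->
    {ae P, forall w, A w -> c1%:E <= g^\+ w} ->
    {ae P, forall w, A w -> g^\- w <= c2%:E} ->
    b%:E * P A <= \int[P]_(x in A) g x.
  move=> c10 c20 cb h1 h2.
  rewrite integralE -cb EFinB muleBl ?fin_num_measure//.
  apply: leeB.
  - rewrite -(integral_cst P mA); apply: ae_ge0_le_integral => //.
    exact: measurable_funepos.
  - rewrite -(integral_cst P mA); apply: ae_ge0_le_integral => //.
    exact: measurable_funeneg.
have [b0|b0] := leP 0%R b.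
- apply: (key b 0%R) => //; first by rewrite subr0.
  + apply: filterS hae => w bw _; rewrite funeposE le_max bw//.
  + apply: filterS hae => w bw _; rewrite funenegE ge_max.
    apply/andP; split => //.
    by rewrite leeNl oppe0 (le_trans _ bw)// lee_fin.
- apply: (key 0%R (- b)%R) => //; first by rewrite oppr_ge0 ltW.
  + by rewrite sub0r opprK.
  + apply: filterS hae => w bw _; rewrite funeposE le_max lexx orbT//.
  + apply: filterS hae => w bw _; rewrite funenegE ge_max.
    apply/andP; split; last by rewrite lee_fin oppr_ge0 ltW.
    by rewrite EFinN leeN2.
Qed.

Lemma ae_lb_from_int (G : set (set Omega)) (hGm : G `<=` measurable)
  (f : Omega -> \bar R) (ffin : forall x, f x \is a fin_num)
  (fG : Gmeas_eR G f) (fint : P.-integrable setT f) (a : R) :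
  (forall A, G A -> a%:E * P A <= \int[P]_(x in A) f x) ->
  {ae P, forall w, a%:E <= f w}.
Proof.
move=> H.
pose E := f @^-1` `]-oo, a%:E[%classic.
have GE : G E by apply: fG; exact: emeasurable_itv.
have mE : measurable E by exact: hGm.
have mf : measurable_fun setT f by exact: measurable_int fint.
have fintE : P.-integrable E f by exact: integrableS fint.
have cint : P.-integrable E (EFin \o cst a) by exact: finite_measure_integrable_cst.
have h0 : \int[P]_(x in E) `|(fun w => f w - a%:E) x| = 0.
  apply/eqP; rewrite eq_le; apply/andP; split; last by apply: integral_ge0 => x _; exact: abse_ge0.
  rewrite (eq_integral (EFin \o cst a \- f)); last first.
    move=> w; rewrite inE /E /= in_itv /=; rewrite -(fineK (ffin w)) lte_fin => fw.
    by rewrite /= -!EFinB ltr0_norm ?subr_lt0// opprB.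
  have IB := integralB mE cint fintE.
  apply: (@le_trans _ _ (\int[P]_(x in E) (EFin \o cst a) x - \int[P]_(x in E) f x)).
    by rewrite -IB; exact: lexx.
  have -> : \int[P]_(x in E) (EFin \o cst a) x = a%:E * P E.
    rewrite -(integral_cst P mE); apply: eq_integral => x _ //.
  have := H E GE; rewrite -sube_le0 => h; exact: h.
have mfa : measurable_fun E (fun w => f w - a%:E).
  by apply: emeasurable_funB => //; exact: measurable_funTS.
have := (@ae_eq_integral_abs _ _ _ P E mE _ mfa).1 h0.
apply: filterS => w hw.
rewrite leNgt; apply/negP => fwa.
have Ew : E w by rewrite /E /= in_itv /=.
move: (hw Ew) fwa => /=; rewrite -(fineK (ffin w)) -EFinB => /eqP.
by rewrite eqe subr_eq0 lte_fin => /eqP ->; rewrite ltxx.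
Qed.
End Util2.

Section Ess.
Context d (Omega : measurableType d) (R : realType) (P : probability Omega R).
Local Open Scope ereal_scope.

Lemma essinf_mono (S S' : set (Omega -> R)) (Yu Yv : Omega -> \bar R) :
  S' `<=` S -> is_essinf P S Yu -> is_essinf P S' Yv -> {ae P, forall w, Yu w <= Yv w}.
Proof.
move=> SS [mYu [hYu _]] [_ [_ hYv]].
apply: hYv => // m /SS; exact: hYu.
Qed.

Lemma essinf_eq (S : set (Omega -> R)) (Yu Yv : Omega -> \bar R) :
  is_essinf P S Yu -> is_essinf P S Yv -> {ae P, forall w, Yu w = Yv w}.
Proof.
move=> hu hv.
have h1 := essinf_mono (@subset_refl _ S) hu hv.
have h2 := essinf_mono (@subset_refl _ S) hv hu.
apply: filterS2 h1 h2 => w a b; apply/eqP; by rewrite eq_le a b.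
Qed.

Lemma shift_le (x y : \bar R) (bv bu : R) :
  x - bv%:E <= y - bu%:E -> x + (bu - bv)%:E <= y.
Proof.
case: x => [x| |]; case: y => [y| |] //=.
- by rewrite -!EFinB -EFinD !lee_fin => h; lra.
all: try by move=> _; rewrite ?leey ?leNye.
Qed.
End Ess.

Section Incl.
Context d (Omega : measurableType d) (R : realType) (P : probability Omega R).
Local Open Scope ereal_scope.

Lemma incl (T : R) (F : R -> set (set Omega)) (hF : filtration T F)
  (p : \bar R) (hp : (1 <= p)%E)
  (U : R -> R -> \bar R) (hU : forall u, (0 <= u <= T)%R -> admissible_utility (U u))
  (B : R -> R -> R)
  (hUB : forall t u v x, (0 <= t)%R -> (t <= u)%R -> (u <= v)%R -> (v <= T)%R ->
      (U v x - (B t v)%:E <= U u x - (B t u)%:E)%E)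
  (t u v : R) (h0t : (0 <= t)%R) (htu : (t <= u)%R) (huv : (u <= v)%R) (hvT : (v <= T)%R)
  (X : Omega -> R) (hX : Lp P p (F u) X) :
  shortfall_set P p F U B t v X `<=` shortfall_set P p F U B t u X.
Proof.
move=> m [hm [C [[CG [Cpos Ceq]] hC]]].
have hFt : (0 <= t <= T)%R by rewrite h0t (le_trans htu (le_trans huv hvT)).
have hu0 : (0 <= u <= T)%R by rewrite (le_trans h0t htu) (le_trans huv hvT).
have hv0 : (0 <= v <= T)%R by rewrite (le_trans h0t (le_trans htu huv)) hvT.
have [sF [sFm _]] := hF.
have hG := sF t hFt; have hGm := sFm t hFt.
have aU := hU u hu0; have aV := hU v hv0.
have mX : measurable_fun setT X.
  move=> _ A mA; rewrite setTI; apply: (sFm u hu0); exact: hX.1.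
have mm : measurable_fun setT m.
  move=> _ A mA; rewrite setTI; apply: hGm; exact: hm.1.
have L1 (Y : Omega -> R) (G : set (set Omega)) : Lp P p G Y -> measurable_fun setT Y ->
    P.-integrable setT (EFin \o Y).
  move=> hY mY; apply/Lfun1_integrable.
  apply: (@Lfun_subset _ _ _ P 1 p (lexx _) hp _ hp).
    exact: fin_num_measure.
  apply/andP; split; rewrite inE; [exact: mY | exact: hY.2].
have iX := L1 X _ hX mX; have im := L1 m _ hm mm.
have iXm : P.-integrable setT (EFin \o (X \+ m)%R).
  apply: (eq_integrable measurableT _ _ _ (integrableD measurableT iX im)) => w _ /=.
  by rewrite EFinD.
have ihb (a b : R) : P.-integrable setT (fun w => (a + b * `|X w + m w|)%:E).
  have := integrableD measurableT (@finite_measure_integrable_cst _ _ _ P setT a measurableT)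
    (integrableZl measurableT b (integrable_norm iXm)).
  by apply: eq_integrable => // w _ /=; rewrite EFinD EFinM.
pose Zu := fun w => U u (X w + m w)%R.
pose Zv := fun w => U v (X w + m w)%R.
have mZu : measurable_fun setT Zu := measurableT_comp (adm_meas aU) (measurable_funD mX mm).
have mZv : measurable_fun setT Zv := measurableT_comp (adm_meas aV) (measurable_funD mX mm).
have [au [bu [bu0 hbu]]] := adm_bound aU.
have [av [bv [bv0 hbv]]] := adm_bound aV.
have mC : measurable_fun setT C.
  move=> _ A mA; rewrite setTI; apply: hGm; exact: CG.
have GT : F t setT.
  by case: hG => G0 GC _; have := GC set0 G0; rewrite setD0.
have intCge : (B t v)%:E <= \int[P]_x C x.
  have := ae_lb_integral measurableT mC hC; rewrite probability_setT mule1; exact.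
have iZvp : P.-integrable setT Zv^\+.
  apply: (le_integrable measurableT (measurable_funepos mZv) _ (ihb av bv)) => w _.
  rewrite gee0_abs ?funepos_ge0// funeposE ge_max; apply/andP; split.
    exact: le_trans (hbv _) (lee_abs _).
  exact: abse_ge0.
have iZvn : P.-integrable setT Zv^\-.
  apply/integrableP; split; first exact: measurable_funeneg.
  rewrite (eq_integral (fun x => Zv^\- x)); last first.
    by move=> x _; rewrite gee0_abs ?funeneg_ge0.
  rewrite ltNge leye_eq; apply/negP => /eqP Hoo.
  move: intCge; rewrite (Ceq _ GT) integralE -/Zv Hoo.
  rewrite -(fineK (integrable_fin_num measurableT iZvp)) /= addeNy leeNy_eq.
  by [].
have iZv : P.-integrable setT Zv.
  have := integrableB measurableT iZvp iZvn; by rewrite -funeposneg.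
have hcmp w : Zv w + (B t u - B t v)%:E <= Zu w.
  exact: shift_le (hUB t u v (X w + m w)%R h0t htu huv hvT).
pose c := (B t u - B t v)%R.
have iZvc : P.-integrable setT (Zv \+ (EFin \o cst c)).
  exact: (integrableD measurableT iZv (@finite_measure_integrable_cst _ _ _ P setT c measurableT)).
have iZu : P.-integrable setT Zu.
  apply: (le_integrable measurableT mZu _ (integrableD measurableT (integrable_abse iZvc)
     (integrable_abse (ihb au bu)))) => w _.
  rewrite [X in _ <= X]gee0_abs; last by rewrite adde_ge0 ?abse_ge0.
  have h1 := hcmp w; have h2 := hbu (X w + m w)%R.
  have [z0|z0] := leP 0 (Zu w).
  - rewrite gee0_abs//; apply: lee_paddl; first exact: abse_ge0.
    exact: le_trans h2 (lee_abs _).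
  - rewrite lte0_abs//; apply: lee_paddr; first exact: abse_ge0.
    apply: (@le_trans _ _ (- (Zv w + c%:E))); first by rewrite leeN2.
    rewrite /= -(abseN (Zv w + c%:E)); exact: lee_abs.
have [f [ffin fG fint fint_eq]] := cond_exp_ex hG hGm iZu.
split; first exact: hm.
exists f; split; first split.
- exact: fG.
- split.
  + have := integrable_lty measurableT (integrable_funepos measurableT fint).
    by under eq_integral do rewrite funeposE.
  + exact: fint_eq.
- apply: (ae_lb_from_int hGm ffin fG fint) => A GA.
  have mA : measurable A := hGm A GA.
  rewrite fint_eq //.
  apply: (@le_trans _ _ (\int[P]_(x in A) (Zv \+ (EFin \o cst c)) x)); last first.
    apply: le_integral => //.
    - exact: integrableS iZvc.
    - exact: integrableS iZu.
  have -> : \int[P]_(x in A) (Zv \+ (EFin \o cst c)) x =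
      \int[P]_(x in A) Zv x + \int[P]_(x in A) (EFin \o cst c) x.
    apply: integralD => //; [exact: integrableS iZv|exact: integrableS (@finite_measure_integrable_cst _ _ _ P setT c measurableT)].
  have -> : \int[P]_(x in A) (EFin \o cst c) x = c%:E * P A.
    rewrite -(integral_cst P mA); apply: eq_integral => x _ //.
  rewrite -(Ceq _ GA).
  have -> : (B t u)%:E * P A = (B t v)%:E * P A + c%:E * P A.
    rewrite -muleDl ?fin_num_measure// -EFinD /c; congr (_ * _); congr EFin; ring.
  apply: leeD2r; exact: ae_lb_integral mA mC hC.
Qed.
End Incl.

Unset Implicit Arguments.

Theorem mainTheorem8 (d : measure_display) (Omega : measurableType d)
  (R : realType) (P : probability Omega R) (T : R)
  (F : R -> set (set Omega)) (hF : filtration T F)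
  (p : \bar R) (hp : (1 <= p)%E)
  (U : R -> R -> \bar R) (hU : forall u, (0 <= u <= T)%R -> admissible_utility (U u))
  (B : R -> R -> R) :
  ((forall t u v x, 0 <= t -> t <= u -> u <= v -> v <= T ->
      (U v x - (B t v)%:E <= U u x - (B t u)%:E)%E) ->
   forall t u v, 0 <= t -> t <= u -> u <= v -> v <= T ->
   forall X, Lp P p (F u) X ->
   forall Yu Yv, shortfall_rho P p F U B t u X Yu ->
                 shortfall_rho P p F U B t v X Yv ->
   {ae P, forall w, (Yu w <= Yv w)%E})
  /\
  ((forall u v, (0 <= u <= T)%R -> (0 <= v <= T)%R -> U u = U v) ->
   (forall t u v, 0 <= t -> t <= u -> u <= T -> t <= v -> v <= T -> B t u = B t v) ->
   forall t u v, 0 <= t -> t <= u -> u <= v -> v <= T ->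
   forall X, Lp P p (F u) X ->
   forall Yu Yv, shortfall_rho P p F U B t u X Yu ->
                 shortfall_rho P p F U B t v X Yv ->
   {ae P, forall w, Yu w = Yv w}).
Proof.
split.
- move=> hUB t u v h0t htu huv hvT X hX Yu Yv hu hv.
  exact: (essinf_mono (incl hF hp hU hUB h0t htu huv hvT hX) hu hv).
- move=> hUeq hBeq t u v h0t htu huv hvT X hX Yu Yv hu hv.
  have eS : shortfall_set P p F U B t u X = shortfall_set P p F U B t v X.
    have h0u : (0 <= u <= T)%R by rewrite (le_trans h0t htu) (le_trans huv hvT).
    have h0v : (0 <= v <= T)%R by rewrite (le_trans h0t (le_trans htu huv)) hvT.
    rewrite /shortfall_set (hUeq u v h0u h0v) (hBeq t u v h0t htu (le_trans huv hvT) (le_trans htu huv) hvT).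
    by [].
  rewrite /shortfall_rho eS in hu.
  exact: essinf_eq hu hv.
Qed.
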